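(* Let $f:\mathbb{R}^n\to\mathbb{R}$ be convex and continuously differentiable, and let $w^*\in\Delta^n$ be a minimizer of $f$ over $\Delta^n$. Let $T>0$ and let $t\mapsto w^t$, $t\in[0,T]$, be continuously differentiable, take values in $\operatorname{int}(\Delta^n)$, start at $w^0=(1/n,\ldots,1/n)$, and satisfy the Cauchy-Simplex gradient flow $$\frac{dw^t}{dt} = -\, w^t\odot\Big(\nabla f(w^t) - \big(w^t\cdot\nabla f(w^t)\big)\mathbb{1}\Big).$$ Then $$f(w^T)-f(w^* )\le \frac{\log(n)}{T}.$$
   Context: $\Delta^n=\{w\in\mathbb{R}^n : \sum_i w_i=1,\ w_i\ge 0\}$ is the probability simplex and $\operatorname{int}(\Delta^n)$ denotes the points of $\Delta^n$ with all coordinates strictly positive. $\odot$ denotes componentwise multiplication and $\mathbb{1}$ the all-ones vector. *)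

(* Defs.v *)
From HB Require Import structures.
From mathcomp Require Import all_boot all_order all_algebra.
From mathcomp Require Import all_classical all_reals all_analysis.
Set Implicit Arguments. Unset Strict Implicit. Unset Printing Implicit Defensive.
Import Order.TTheory GRing.Theory Num.Theory.
Import numFieldNormedType.Exports.
Local Open Scope ring_scope.
Local Open Scope classical_set_scope.

Definition dotv (R : realType) (n : nat) (a b : 'rV[R]_n) : R :=
  \sum_(i < n) a ord0 i * b ord0 i.

Definition simplex (R : realType) (n : nat) : set 'rV[R]_n :=
  [set w | \sum_(i < n) w ord0 i = 1 /\ forall i, 0 <= w ord0 i].

Definition simplex_int (R : realType) (n : nat) : set 'rV[R]_n :=
  [set w | \sum_(i < n) w ord0 i = 1 /\ forall i, 0 < w ord0 i].

Definition convex_fun (R : realType) (n : nat) (f : 'rV[R]_n -> R) : Prop :=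
  forall (x y : 'rV[R]_n) (l : R), 0 <= l <= 1 ->
    f (l *: x + (1 - l) *: y) <= l * f x + (1 - l) * f y.

Definition grad (R : realType) (n : nat) (f : 'rV[R]_n -> R) (x : 'rV[R]_n)
  : 'rV[R]_n :=
  \row_(i < n) ('D_(delta_mx ord0 i) f x).

Definition C1 (R : realType) (n : nat) (f : 'rV[R]_n -> R) : Prop :=
  (forall x, differentiable f x) /\ continuous (grad f).

Definition cs_field (R : realType) (n : nat) (f : 'rV[R]_n -> R) (w : 'rV[R]_n)
  : 'rV[R]_n :=
  \row_(i < n) (- (w ord0 i * (grad f w ord0 i - dotv w (grad f w)))).

(* Main.v *)
Require Import Defs.
From HB Require Import structures.
From mathcomp Require Import all_boot all_order all_algebra.
From mathcomp Require Import all_classical all_reals all_analysis.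
From mathcomp Require Import ring lra.
Import Order.TTheory GRing.Theory Num.Theory.
Import numFieldNormedType.Exports.
Local Open Scope ring_scope.
Local Open Scope classical_set_scope.

Lemma chain_rule (R : realType) (V : normedModType R) (g : V -> R) (u : R -> V) t du :
  differentiable g (u t) -> is_derive t 1 u du -> is_derive t 1 (g \o u) ('d g (u t) du).
Proof.
move=> dg [hd hv].
have dU : differentiable u t by apply/derivable1_diffP.
apply: DeriveDef.
  by apply/derivable1_diffP; exact: differentiable_comp.
rewrite deriveE; last exact: differentiable_comp.
rewrite diff_comp //=. by rewrite -hv deriveE.
Qed.

Lemma diff_dotv (R : realType) (n : nat) (g : 'rV[R]_n -> R) x v :
  differentiable g x -> 'd g x v = dotv v (grad g x).
Proof.
move=> dg; rewrite {1}(row_sum_delta v) linear_sum /dotv.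
apply: eq_bigr => i _; rewrite linearZ /= mxE -deriveE //.
Qed.

Lemma cvx_grad (R : realType) (n : nat) (g : 'rV[R]_n -> R) x y :
  convex_fun g -> differentiable g x -> 'd g x (y - x) <= g y - g x.
Proof.
move=> cg dg; rewrite -deriveE //.
have dd : derivable g x (y - x) by exact: diff_derivable.
rewrite /derive.
set G := (fun h : R => _).
have cG : G @ 0^'+ --> lim (G @ 0^').
  apply: cvg_trans dd => P [e /= e0 HP]; exists e => // z Hz zpos.
  by apply: HP => //; rewrite gt_eqF.
apply: (cvgr_to_le cG).
near=> h.
have h0 : 0 < h by near: h; exact: nbhs_right_gt.
have h1 : h <= 1 by near: h; exact: nbhs_right_le.
rewrite /G /= /shift.
have -> : h *: (y - x) + x = h *: y + (1 - h) *: x.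
  by rewrite scalerBr scalerBl scale1r -addrA [_ + x]addrC.
have := cg y x h; rewrite (ltW h0) h1 => /(_ isT) H.
rewrite -[X in _ <= X](mulKf (lt0r_neq0 h0)).
rewrite [_ *: _]/(_ * _) ler_pM2l ?invr_gt0 //.
rewrite lerBlDr (le_trans H) //.
by rewrite mulrBl mul1r mulrBr addrA addrAC.
Unshelve. all: by end_near.
Qed.

Lemma cont_sum (T : topologicalType) (R : realType) n (G : 'I_n -> T -> R) x :
  (forall i, {for x, continuous (G i)}) ->
  {for x, continuous (fun s => \sum_(i < n) G i s)}.
Proof.
move=> h; apply: (@cvg_big _ _ +%R 0 xpredT); last by move=> i _; exact: h.
exact: add_continuous.
Qed.

Lemma var_id (R : realType) n (a b : 'I_n -> R) (m : R) :
  \sum_(i < n) - (a i * (b i - m)) * b i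
  = - \sum_(i < n) a i * (b i - m) ^+ 2 - m * \sum_(i < n) a i * (b i - m).
Proof.
rewrite mulr_sumr -sumrN -sumrB; apply: eq_bigr => i _; ring.
Qed.

Theorem theorem4p3 (R : realType) (n : nat) (f : 'rV[R]_n -> R)
  (wstar : 'rV[R]_n) (T : R) (w w' : R -> 'rV[R]_n) :
  convex_fun f -> C1 f ->
  simplex wstar -> (forall v, simplex v -> f wstar <= f v) ->
  0 < T ->
  {within `[0, T], continuous w} ->
  (forall t, 0 < t < T -> is_derive t (1 : R) w (w' t)) ->
  {within `[0, T], continuous w'} ->
  (forall t, 0 <= t <= T -> simplex_int (w t)) ->
  w 0 = const_mx (n%:R)^-1 ->
  (forall t, 0 <= t <= T -> w' t = cs_field f (w t)) ->
  f (w T) - f wstar <= ln (n%:R) / T.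
Proof.
move=> cvx [dfe cgrad] [sws ws0] wmin T0 cw dw _ wint w0 wcs.
set fs := f wstar.
have wi0 t : 0 <= t <= T -> forall i, 0 < w t ord0 i.
  by move=> /wint [].
have [s1 _] : simplex_int (w 0) by apply: wint; rewrite lexx ltW.
have n0 : (0 < n)%N.
  case: (posnP n) => [n0|//]; subst n.
  by move: s1; rewrite big_ord0 => /eqP; rewrite eq_sym oner_eq0.
have dotvB a b c : dotv (a - b) c = dotv a c - dotv b c.
  by rewrite /dotv -sumrB; apply: eq_bigr => i _; rewrite !mxE mulrBl.
have key1 t : 0 < t < T -> dotv (w' t) (grad f (w t)) <= 0.
  move=> /andP[t0 tT]; rewrite wcs ?(ltW t0) ?(ltW tT) //.
  rewrite /dotv.
  under eq_bigr do rewrite mxE.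
  rewrite var_id.
  have -> : \sum_(i < n) w t ord0 i * (grad f (w t) ord0 i - dotv (w t) (grad f (w t))) = 0.
    under eq_bigr do rewrite mulrBr.
    rewrite sumrB -mulr_suml.
    have [-> _] : simplex_int (w t) by apply: wint; rewrite !ltW.
    by rewrite mul1r /dotv subrr.
  rewrite mulr0 subr0 oppr_le0; apply: sumr_ge0 => i _.
  by apply: mulr_ge0; [apply: ltW; apply: wi0; rewrite !ltW | exact: sqr_ge0].
pose Phi := fun s => - \sum_(i < n) wstar ord0 i * ln (w s ord0 i).
pose h := fun s => Phi s + s * (f (w s) - fs).
pose dh := fun t => (dotv wstar (grad f (w t)) - dotv (w t) (grad f (w t)))
   + ((f (w t) - fs) + t * dotv (w' t) (grad f (w t))).
have dh_ok t : 0 < t < T -> is_derive t 1 h (dh t).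
  move=> tI.
  have tI' : 0 <= t <= T by case/andP: tI => ? ?; rewrite !ltW.
  have dc i : is_derive t 1 (fun s => w s ord0 i) (w' t ord0 i).
    case: (dw t tI) => hd hv; apply: DeriveDef.
      exact: ((derivable_mxP _ _ _).1 hd ord0 i).
    by rewrite -hv derive_mx // mxE.
  have dl i : is_derive t 1 (fun s => wstar ord0 i * ln (w s ord0 i))
      (wstar ord0 i *: ((w t ord0 i)^-1 * w' t ord0 i)).
    exact: (is_deriveZ (wstar ord0 i) (is_derive1_comp (is_derive1_ln (wi0 t tI' i)) (dc i))).
  have dP := is_deriveN (is_derive_sum dl).
  have dF : is_derive t 1 (fun s => f (w s) - fs) (dotv (w' t) (grad f (w t)) - 0).
    rewrite -diff_dotv //.
    have H1 := @chain_rule _ _ _ _ _ _ (dfe _) (dw t tI).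
    have H2 := is_deriveB H1 (is_derive_cst fs t 1).
    exact: H2.
  have dM := is_deriveM (@is_derive_id _ _ t 1) dF.
  have dS := is_deriveD dP dM.
  have -> : h = (- \sum_(i < n) (fun s => wstar ord0 i * ln (w s ord0 i))) + (id * (fun s => f (w s) - fs)).
    by apply/funext => s; rewrite /h /Phi /= fct_sumE.
  apply: (is_derive_eq dS).
  have E1 : - \sum_(i < n) wstar ord0 i *: ((w t ord0 i)^-1 * w' t ord0 i)
      = dotv wstar (grad f (w t)) - dotv (w t) (grad f (w t)).
    rewrite wcs // -sumrN -[X in _ - X]mul1r -sws mulr_suml {1}/dotv -sumrB.
    apply: eq_bigr => i _; rewrite mxE.
    have := wi0 t tI' i; move: (w t ord0 i) => c c0.
    rewrite /GRing.scale /=.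

    field; exact: lt0r_neq0.
  rewrite E1 subr0 /dh [_%:A]mulr1 /GRing.scale /=; ring.
have dh_le t : 0 < t < T -> dh t <= 0.
  move=> tI; have /andP[t0 tT] := tI.
  rewrite /dh -dotvB -diff_dotv //.
  have H1 := @cvx_grad _ _ _ _ wstar cvx (dfe (w t)).
  have H2 : t * dotv (w' t) (grad f (w t)) <= 0.
    by rewrite pmulr_rle0 // key1.
  rewrite /fs; lra.
have hcont : {within `[0, T], continuous h}.
  rewrite continuous_subspace_in => x xI.
  have xI' : 0 <= x <= T by move: xI; rewrite inE /= in_itv.
  have cid : {for x, continuous (id : subspace `[0, T] -> R)}.
    by apply: (continuous_subspaceT (f := id)) => z; exact: cvg_id.
  have cwx : {for x, continuous (w : subspace `[0, T] -> _)} by exact: cw.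
  rewrite /from_subspace /h.
  apply: (continuousD (f := Phi : subspace `[0, T] -> R) (g := fun s => s * (f (w s) - fs))).
    apply: (continuousN (f := fun s : subspace `[0, T] => \sum_(i < n) wstar ord0 i * ln (w s ord0 i))).
    apply: cont_sum => i.
    apply: (continuousM (s := fun=> wstar ord0 i)); first exact: cvg_cst.
    have K := @continuous_comp (subspace `[0, T]) R R (fun s => w s ord0 i) (@ln R) x. apply: K.
      have K2 := @continuous_comp (subspace `[0, T]) _ _ w (fun M : 'rV[R]_n => M ord0 i) x cwx. apply: K2. exact: coord_continuous.
    exact: continuous_ln (wi0 x xI' i).
  apply: (continuousM (s := fun s : subspace `[0, T] => (s : R)) (t := fun s : subspace `[0, T] => f (w s) - fs)); first exact: cid.
  apply: (continuousB (f := fun s : subspace `[0, T] => f (w s)) (g := fun=> fs)); last exact: cvg_cst.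
  exact: (@continuous_comp (subspace `[0, T]) _ _ w f x cwx (differentiable_continuous (dfe _))).
have T0' : 0 <= T by exact: ltW.
have hle : h T <= h 0.
  apply: (ler0_derive1_le_cc (f:=h) (a:=0) (b:=T)) => //.
  - by move=> x; rewrite in_itv /= => xI; have [? _] := dh_ok x xI.
  - by move=> x; rewrite in_itv /= => xI; have [_ E] := dh_ok x xI; rewrite derive1E E; exact: dh_le.
  - by rewrite in_itv /= lexx T0'.
  - by rewrite in_itv /= lexx T0'.
have h0 : h 0 = ln n%:R.
  rewrite /h /Phi mul0r addr0 w0.
  under eq_bigr do rewrite mxE lnV ?posrE ?ltr0n // mulrN.
  by rewrite sumrN opprK -mulr_suml sws mul1r.
have PT : 0 <= Phi T.
  rewrite /Phi oppr_ge0; apply: sumr_le0 => i _.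
  apply: mulr_ge0_le0 => //; apply: ln_le0.
  have [sT pT] : simplex_int (w T) by apply: wint; rewrite lexx T0'.
  rewrite -sT (bigD1 i) //= lerDl; apply: sumr_ge0 => j _; exact: ltW.
rewrite ler_pdivlMr // mulrC -h0.
move: hle PT; rewrite /h; lra.
Qed.
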